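(* Let $G_1,G_2$ be finite simple graphs with the same number of vertices. Then $\dim_{\mathbb{C}} Z(A_{G_1})=\dim_{\mathbb{C}} Z(A_{G_2})$ (i.e. they belong to the same Clifford class) if and only if their adjacency matrices, regarded as matrices over the field $\mathbb{F}_2$, have the same rank.
   Context: All graphs are finite, with no loops and no multiple edges. For a graph $G$ with vertices numbered $1,\dots,n$, the Clifford graph algebra $A_G$ is the unital associative $\mathbb{C}$-algebra generated by $e_1,\dots,e_n$ subject to the relations $e_i^2=-1$ for all $i$; $e_ie_j=-e_je_i$ if $i\neq j$ and vertices $i,j$ are adjacent; and $e_ie_j=e_je_i$ if $i\ne j$ and vertices $i,j$ are not adjacent. $Z(A)$ denotes the center. The adjacency matrix of $G$ is the $n\times n$ matrix $(a_{ij})$ with $a_{ij}=1$ if vertices $i,j$ are adjacent and $a_{ij}=0$ otherwise (so $a_{ii}=0$). *)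

(* Defs.v *)
From HB Require Import structures.
From mathcomp Require Import all_boot all_order all_algebra all_field.
Set Implicit Arguments. Unset Strict Implicit. Unset Printing Implicit Defensive.
Import Order.TTheory GRing.Theory Num.Theory.
Local Open Scope ring_scope.

(* A finite simple graph on vertex set 'I_n is a symmetric irreflexive
   relation [adj : rel 'I_n]. *)

Definition adjF2 (n : nat) (adj : rel 'I_n) : 'M['F_2]_n :=
  \matrix_(i, j) (adj i j)%:R.

(* Size of the monomial basis {e_S | S subset of vertices}. *)
Definition cliffN (n : nat) : nat := #|{set 'I_n}|.

(* Matrix of right multiplication by the generator e_i in the ordered
   monomial basis e_S = e_{s1} ... e_{sk} (s1 < ... < sk), acting on row
   vectors:  e_S * e_i = (-1)^(#{j in S | j > i, j adj i} + [i in S]) e_{S xor {i}}. *)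
Definition cliff_gen (n : nat) (adj : rel 'I_n) (i : 'I_n)
  : 'M[algC]_(cliffN n) :=
  \matrix_(r, c)
    (let S : {set 'I_n} := enum_val r in
     let T : {set 'I_n} := enum_val c in
     if T == (if i \in S then S :\ i else i |: S) then
       (-1) ^+ (#|[set j in S | (i < j)%N && adj i j]| + (i \in S))
     else 0).

Definition cliff_mono (n : nat) (adj : rel 'I_n) (S : {set 'I_n})
  : 'M[algC]_(cliffN n) :=
  \prod_(i <- enum S) cliff_gen adj i.

(* The Clifford graph algebra A_G, realised (faithfully, via its regular
   representation) as the subalgebra of square matrices spanned by all
   monomials in the generators, encoded as an mxalgebra space. *)
Definition cliff_alg (n : nat) (adj : rel 'I_n) : 'A[algC]_(cliffN n * cliffN n, cliffN n) :=
  (\sum_(S : {set 'I_n}) <<mxvec (cliff_mono adj S)>>)%MS.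

(* Its center Z(A_G) (mxalgebra's 'Z), a subspace whose rank is its
   dimension over the base field. *)
Definition cliff_center (n : nat) (adj : rel 'I_n) :=
  ('Z(cliff_alg adj))%MS.

(* Main.v *)
Require Import Defs.
From HB Require Import structures.
From mathcomp Require Import all_boot all_order all_algebra all_field.
From mathcomp Require Import mxabelem.
Set Implicit Arguments. Unset Strict Implicit. Unset Printing Implicit Defensive.
Import Order.TTheory GRing.Theory Num.Theory.
Local Open Scope ring_scope.

Section S.
Variable n : nat.
Variable adj : rel 'I_n.
Hypothesis sym : symmetric adj.
Hypothesis irr : irreflexive adj.

Definition sd (T S : {set 'I_n}) : {set 'I_n} := [set x | (x \in T) != (x \in S)].

Lemma in_sd x T S : (x \in sd T S) = ((x \in T) != (x \in S)).
Proof. by rewrite inE. Qed.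

Lemma prod_sd (h : 'I_n -> algC) (T S : {set 'I_n}) :
  (forall t, h t * h t = 1) ->
  \prod_(t in sd T S) h t = \prod_(t in T) h t * \prod_(t in S) h t.
Proof.
move=> hh.
rewrite (bigID (mem S)) /= [\prod_(t in T) _](bigID (mem S)) /=.
rewrite [\prod_(t in S) _](bigID (mem T)) /=.
have E1 : \prod_(i in sd T S | i \in S) h i = \prod_(i in S | i \notin T) h i.
  by apply: eq_bigl => i; rewrite in_sd; case: (i \in T); case: (i \in S).
have E2 : \prod_(i in sd T S | i \notin S) h i = \prod_(i in T | i \notin S) h i.
  by apply: eq_bigl => i; rewrite in_sd; case: (i \in T); case: (i \in S).
have E3 : \prod_(i in S | i \in T) h i = \prod_(i in T | i \in S) h i.
  by apply: eq_bigl => i; rewrite andbC.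
rewrite E1 E2 E3.
have E4 : \prod_(i in T | i \in S) h i * \prod_(i in T | i \in S) h i = 1.
  by rewrite -big_split /=; apply: big1 => i _; rewrite hh.
by rewrite mulrACA E4 mul1r mulrC.
Qed.


Lemma sdK T S : sd (sd T S) S = T.
Proof. by apply/setP => x; rewrite !in_sd; case: (x \in T); case: (x \in S). Qed.

Lemma sd_eq U T S : (U == sd T S) = (T == sd U S).
Proof. by apply/eqP/eqP => ->; rewrite sdK. Qed.

Lemma sdKl T S : sd T (sd T S) = S.
Proof. by apply/setP => x; rewrite !in_sd; case: (x \in T); case: (x \in S). Qed.

Lemma sdC T S : sd T S = sd S T.
Proof. by apply/setP => x; rewrite !in_sd; case: (x \in T); case: (x \in S). Qed.

Lemma sdA T S R : sd (sd T S) R = sd T (sd S R).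
Proof. by apply/setP => x; rewrite !in_sd; case: (x \in T); case: (x \in S); case: (x \in R). Qed.

Lemma sd0 T : sd T set0 = T.
Proof. by apply/setP => x; rewrite !in_sd inE; case: (x \in T). Qed.

Lemma sd0l T : sd set0 T = T.
Proof. by rewrite sdC sd0. Qed.

Definition f (t s : 'I_n) : algC :=
  if ((s < t)%N && adj s t) || (t == s) then -1 else 1.

Definition sg (T S : {set 'I_n}) : algC := \prod_(t in T) \prod_(s in S) f t s.

Lemma f2 t s : f t s * f t s = 1.
Proof. by rewrite /f; case: ifP => _; rewrite ?mulrNN mulr1. Qed.

Lemma prod2 (I : finType) (A : pred I) (h : I -> algC) :
  (forall t, h t * h t = 1) -> (\prod_(t in A) h t) * (\prod_(t in A) h t) = 1.
Proof. by move=> hh; rewrite -big_split /=; apply: big1 => t _; rewrite hh. Qed.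

Lemma sg_sdl T S R : sg (sd T S) R = sg T R * sg S R.
Proof. by apply: prod_sd => t; apply: prod2 => s; apply: f2. Qed.

Lemma sg_sdr T S R : sg T (sd S R) = sg T S * sg T R.
Proof.
rewrite /sg -big_split /=; apply: eq_bigr => t _.
by apply: prod_sd => s; apply: f2.
Qed.

Lemma sg2 T S : sg T S * sg T S = 1.
Proof. by apply: prod2 => t; apply: prod2 => s; apply: f2. Qed.

Lemma sg0l S : sg set0 S = 1.
Proof. by rewrite /sg big_set0. Qed.

Lemma sg0r S : sg S set0 = 1.
Proof. by rewrite /sg; apply: big1 => t _; rewrite big_set0. Qed.

Lemma prod_pm (V : {set 'I_n}) (P : pred 'I_n) :
  \prod_(t in V) (if P t then -1 else 1 : algC) = (-1) ^+ #|[set t in V | P t]|.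
Proof.
rewrite -big_mkcondr /= -prodr_const; apply: eq_bigl => t; by rewrite !inE.
Qed.

Lemma sg_comm S R :
  sg S R * sg R S = \prod_(r in R) (-1) ^+ #|[set s in S | adj s r]|.
Proof.
rewrite /sg [X in X * _]exchange_big /= -big_split /=; apply: eq_bigr => r _.
rewrite -big_split /= -prod_pm; apply: eq_bigr => s _.
rewrite /f; case: (ltngtP s r) => [lt|gt|eq] /=.
- have ne : (s == r) = false by apply/eqP => E; move: lt; rewrite E ltnn.
  by rewrite ne eq_sym ne orbF mul1r.
- have ne : (s == r) = false by apply/eqP => E; move: gt; rewrite E ltnn.
  by rewrite ne eq_sym ne orbF mulr1 sym.
- have -> : s = r by apply: val_inj.
  by rewrite eqxx irr /= mulrNN mulr1.
Qed.

Local Notation N := (cliffN n).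

Definition mono (S : {set 'I_n}) (w : {set 'I_n} -> algC) : 'M[algC]_N :=
  \matrix_(r, c) (if enum_val c == sd (enum_val r) S then w (enum_val r) else 0).

Lemma mulmx_monoL S w (X : 'M[algC]_N) r c :
  (mono S w *m X) r c = w (enum_val r) * X (enum_rank (sd (enum_val r) S)) c.
Proof.
rewrite mxE (bigD1 (enum_rank (sd (enum_val r) S))) //= mxE enum_rankK eqxx.
rewrite big1 ?addr0 // => k nk; rewrite mxE.
case: eqP => [ek|]; last by rewrite mul0r.
by move: nk; rewrite -ek enum_valK eqxx.
Qed.

Lemma mulmx_monoR S w (X : 'M[algC]_N) r c :
  (X *m mono S w) r c =
  X r (enum_rank (sd (enum_val c) S)) * w (sd (enum_val c) S).
Proof.
rewrite mxE (bigD1 (enum_rank (sd (enum_val c) S))) //= mxE enum_rankK.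
rewrite sdK eqxx.
rewrite big1 ?addr0 // => k nk; rewrite mxE.
case: eqP => [ek|]; last by rewrite mulr0.
by move: nk; rewrite ek sdK enum_valK eqxx.
Qed.

Lemma sd1 S i : sd S [set i] = if i \in S then S :\ i else i |: S.
Proof.
apply/setP => x; rewrite in_sd inE; case: ifP => iS; rewrite !inE;
case: (x =P i) => [->|_]; rewrite ?iS //=; by case: (x \in S).
Qed.

Lemma sg1 V i :
  sg V [set i] = (-1) ^+ (#|[set j in V | (i < j)%N && adj i j]| + (i \in V)).
Proof.
rewrite /sg; under eq_bigr do rewrite big_set1.
have E : forall t, f t i = (if (i < t)%N && adj i t then -1 else 1) *
                           (if t == i then -1 else 1).
  move=> t; rewrite /f; case: eqP => [->|_]; first by rewrite ltnn /= mul1r.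
  by rewrite orbF mulr1.
under eq_bigr do rewrite E.
rewrite big_split /= !prod_pm exprD; congr (_ * _); congr (_ ^+ _).
case: (boolP (i \in V)) => iV.
  by rewrite -[RHS]/(1%N); rewrite -(cards1 i); apply: eq_card => x; rewrite !inE; case: eqP => [->|]; rewrite ?iV ?andbF.
by rewrite -[RHS]/(0%N); apply/eqP; rewrite cards_eq0; apply/eqP/setP => x; rewrite !inE; case: eqP => [->|]; rewrite ?(negbTE iV) ?andbF.
Qed.

Lemma gen_mono i : cliff_gen adj i = mono [set i] (fun V => sg V [set i]).
Proof. by apply/matrixP => r c; rewrite !mxE sd1 sg1. Qed.

Lemma mono0 : mono set0 (fun T => sg T set0) = 1.
Proof.
apply/matrixP => r c; rewrite !mxE sd0 sg0r (inj_eq enum_val_inj) eq_sym.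
by case: eqP.
Qed.

Lemma prod_seq (s : seq 'I_n) : sorted (fun x y : 'I_n => (x < y)%N) s ->
  \prod_(i <- s) cliff_gen adj i = mono [set x in s] (fun T => sg T [set x in s]).
Proof.
elim: s => [|i s IH] /=.
  have -> : [set x in [::] : seq 'I_n] = set0 by apply/setP => x; rewrite !inE.
  by rewrite big_nil mono0.
move=> ps; have ss := path_sorted ps.
have alls : all (fun y : 'I_n => (i < y)%N) s.
  by apply: (order_path_min _ ps) => x y z; apply: ltn_trans.
have iNs : i \notin s.
  by apply/negP => /(allP alls); rewrite ltnn.
have Si : [set x in i :: s] = sd [set i] [set x in s].
  apply/setP => x; rewrite in_sd !inE; case: eqP => [->|_] /=.
    by rewrite (negbTE iNs).
  by case: (x \in s).
have sgi : sg [set i] [set x in s] = 1.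
  rewrite /sg big_set1; apply: big1 => y; rewrite inE => ys.
  have := allP alls y ys; rewrite /f => iy.
  rewrite ltnNge (ltnW iy) /=.
  case: eqP => [E|//]; by move: iy; rewrite E ltnn.
rewrite big_cons IH // gen_mono Si; apply/matrixP => r c.
rewrite mulmx_monoL !mxE enum_rankK sdA sg_sdl sg_sdr sgi mulr1.
by case: eqP => _; rewrite ?mulr0.
Qed.

Lemma sorted_enum (S : {set 'I_n}) : sorted (fun x y : 'I_n => (x < y)%N) (enum S).
Proof.
rewrite /enum_mem; apply: sorted_filter; first by move=> x y z; apply: ltn_trans.
have := iota_ltn_sorted 0 n; rewrite -val_enum_ord sorted_map.
by rewrite enumT.
Qed.

Lemma mono_formula S : cliff_mono adj S = mono S (fun T => sg T S).
Proof. by rewrite /cliff_mono prod_seq ?sorted_enum // set_enum. Qed.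

Definition v (S : {set 'I_n}) := mxvec (cliff_mono adj S).
Definition Mm : 'M[algC]_(N, N * N) := \matrix_(k < N) v (enum_val k).

Lemma alg_sub_Mm : (cliff_alg adj <= Mm)%MS.
Proof.
apply/sumsmx_subP => S _; rewrite genmxE.
have -> : mxvec (cliff_mono adj S) = row (enum_rank S) Mm by rewrite rowK enum_rankK.
exact: row_sub.
Qed.

Lemma mono_in_alg S : (cliff_mono adj S \in cliff_alg adj)%MS.
Proof. by apply: (sumsmx_sup S) => //; rewrite genmxE. Qed.

Lemma alg_decomp (x : 'M[algC]_N) : (x \in cliff_alg adj)%MS ->
  exists d : 'I_N -> algC, x = \sum_k d k *: cliff_mono adj (enum_val k).
Proof.
move=> /submx_trans /(_ alg_sub_Mm) /submxP [D E].
exists (fun k => D 0 k); apply: (can_inj (@mxvecK _ N N)).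
rewrite E mulmx_sum_row linear_sum; apply: eq_bigr => k _.
by rewrite linearZ rowK.
Qed.

Lemma entry_sum (d : 'I_N -> algC) a b :
  (\sum_k d k *: cliff_mono adj (enum_val k)) a b =
  d (enum_rank (sd (enum_val a) (enum_val b))) *
  sg (enum_val a) (sd (enum_val a) (enum_val b)).
Proof.
rewrite summxE (bigD1 (enum_rank (sd (enum_val a) (enum_val b)))) //=.
rewrite mxE mono_formula mxE enum_rankK.
rewrite sdKl eqxx big1 ?addr0 // => k nk.
rewrite mxE mono_formula mxE; case: eqP => [E|]; last by rewrite mulr0.
by move: nk; rewrite -[k]enum_valK E sdKl enum_valK eqxx.
Qed.

Definition Kset : {set {set 'I_n}} :=
  [set S : {set 'I_n} | [forall r : 'I_n, ~~ odd #|[set s in S | adj s r]|]].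

Lemma sg_sym S R : S \in Kset -> sg R S = sg S R.
Proof.
rewrite inE => /forallP K.
have E : sg S R * sg R S = 1.
  rewrite sg_comm; apply: big1 => r _.
  by rewrite -signr_odd (negbTE (K r)).
by rewrite -[LHS]mul1r -(sg2 S R) -mulrA E mulr1.
Qed.

Lemma mono_comm S R : S \in Kset ->
  cliff_mono adj R *m cliff_mono adj S = cliff_mono adj S *m cliff_mono adj R.
Proof.
move=> SK; rewrite !mono_formula; apply/matrixP => r c.
rewrite !mulmx_monoL !mxE !enum_rankK sdA [sd R S]sdC -sdA.
rewrite !sg_sdl (sg_sym R SK).
by case: eqP => _; rewrite ?mulr0 // mulrCA !mulrA.
Qed.

Definition Mk : 'M[algC]_(#|Kset|, N * N) := \matrix_(k < #|Kset|) v (enum_val k).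

Lemma e0 : 'I_N. Proof. exact: enum_rank set0. Defined.

Lemma Mk_free : \rank Mk = #|Kset|.
Proof.
apply/eqP; apply/row_freeP.
exists (\matrix_(j, k) (if j == mxvec_index (enum_rank (set0 : {set 'I_n}))
                         (enum_rank (enum_val k)) then 1 else 0)).
apply/matrixP => a b; rewrite !mxE.
rewrite (bigD1 (mxvec_index (enum_rank (set0 : {set 'I_n})) (enum_rank (enum_val b)))) //=.
rewrite !mxE eqxx mulr1 big1 ?addr0; last first.
  by move=> j /negbTE nj; rewrite !mxE nj mulr0.
rewrite /v mxvecE mono_formula mxE !enum_rankK sd0l sg0l.
rewrite (inj_eq enum_val_inj) eq_sym.
by case: eqP.
Qed.

Lemma vK_sub S : S \in Kset -> (v S <= Mk)%MS.
Proof.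
move=> SK; have -> : v S = row (enum_rank_in SK S) Mk.
  by rewrite rowK enum_rankK_in.
exact: row_sub.
Qed.

Lemma Mk_sub_Z : (Mk <= cliff_center adj)%MS.
Proof.
apply/row_subP => k; rewrite rowK.
have SK : enum_val k \in Kset by apply: enum_valP.
apply/center_mxP; split; first exact: mono_in_alg.
move=> B /alg_decomp [d ->].
rewrite mulmx_suml mulmx_sumr; apply: eq_bigr => j _.
by rewrite -scalemxAl -scalemxAr mono_comm.
Qed.

Lemma Z_sub_Mk : (cliff_center adj <= Mk)%MS.
Proof.
apply/row_subP => i.
have [x xE] : exists x, row i (cliff_center adj) = mxvec x.
  by exists (vec_mx (row i (cliff_center adj))); rewrite vec_mxK.
rewrite xE; have : (x \in cliff_center adj)%MS by rewrite -xE row_sub.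
move=> /center_mxP [xA xC].
have [d dE] := alg_decomp xA.
have d0 : forall k, enum_val k \notin Kset -> d k = 0.
  move=> k; rewrite inE negb_forall => /existsP [r odr].
  rewrite negbK in odr.
  set S := enum_val k; set R := [set r].
  have := xC _ (mono_in_alg R).
  move/matrixP => /(_ (enum_rank set0) (enum_rank (sd S R))).
  rewrite {1}mono_formula mulmx_monoL {1}mono_formula mulmx_monoR !enum_rankK.
  rewrite sd0l sg0l mul1r sdK dE !entry_sum !enum_rankK sd0l sg0l mulr1.
  rewrite [sd S R]sdC sdKl /S enum_valK.
  have cm : sg S R * sg R S = -1.
    by rewrite sg_comm big_set1 -signr_odd odr.
  have E : sg R S = - sg S R.
    by rewrite -[LHS]mul1r -(sg2 S R) -mulrA cm mulrN1.
  rewrite E mulrN => /eqP; rewrite -subr_eq0 -opprD oppr_eq0 -mulr2n mulrn_eq0 /=.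
  move/eqP => h; rewrite -[d k]mulr1 -(sg2 S R) mulrA h mul0r //.
rewrite dE linear_sum summx_sub // => k _.
rewrite linearZ /=.
case: (boolP (enum_val k \in Kset)) => kK; first by rewrite scalemx_sub // vK_sub.
by rewrite d0 // scale0r sub0mx.
Qed.

Lemma rank_Z : \rank (cliff_center adj) = #|Kset|.
Proof.
rewrite -Mk_free; apply/eqP; rewrite eqn_leq.
by rewrite !mxrankS ?Z_sub_Mk ?Mk_sub_Z.
Qed.

Definition phi (S : {set 'I_n}) : 'rV['F_2]_n := \row_j ((j \in S)%:R).

Lemma F2_nat m : ((m%:R : 'F_2) == 0) = ~~ odd m.
Proof.
rewrite -(Fp_nat_mod (isT : prime 2)) modn2.
by case: (odd m).
Qed.

Lemma phiA S r : (phi S *m adjF2 adj) 0 r = (#|[set s in S | adj s r]|)%:R.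
Proof.
rewrite mxE -sum1_card natr_sum [RHS]big_mkcond /=; apply: eq_bigr => j _.
by rewrite !mxE inE; case: (j \in S); case: (adj j r); rewrite /= ?mulr1 ?mul0r ?mulr0.
Qed.

Lemma phi_inj : injective phi.
Proof.
move=> S T /rowP E; apply/setP => j; have := E j; rewrite !mxE.
by case: (j \in S); case: (j \in T) => //= /eqP; rewrite ?oner_eq0 // eq_sym oner_eq0.
Qed.

Lemma F2_01 (a : 'F_2) : a = (a != 0)%:R.
Proof. by apply: val_inj; case: a => [[|[|k]] //=]. Qed.

Lemma card_K : #|Kset| = (2 ^ (n - \rank (adjF2 adj)))%N.
Proof.
have -> : (2 ^ (n - \rank (adjF2 adj)))%N = #|rowg (kermx (adjF2 adj))|.
  by rewrite card_rowg mxrank_ker card_Fp.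
rewrite -(card_imset _ phi_inj).
apply: eq_card => u; rewrite mem_rowg sub_kermx.
apply/imsetP/idP => [[S SK ->] | uA].
  apply/eqP/rowP => r; rewrite phiA mxE; apply/eqP; rewrite F2_nat.
  by move: SK; rewrite inE => /forallP.
have uE : u = phi [set j | u 0 j != 0].
  by apply/rowP => j; rewrite !mxE inE -F2_01.
exists [set j | u 0 j != 0] => //.
rewrite inE; apply/forallP => r; rewrite -F2_nat -phiA -uE.
by rewrite (eqP uA) mxE.
Qed.

End S.

Theorem mainTheorem5 (n : nat) (G1 G2 : rel 'I_n)
  (sym1 : symmetric G1) (irr1 : irreflexive G1)
  (sym2 : symmetric G2) (irr2 : irreflexive G2) :
  \rank (cliff_center G1) = \rank (cliff_center G2) <->
  \rank (adjF2 G1) = \rank (adjF2 G2).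
Proof.
rewrite (rank_Z sym1 irr1) (rank_Z sym2 irr2) !card_K.
have h1 := rank_leq_row (adjF2 G1); have h2 := rank_leq_row (adjF2 G2).
split => [/(expnI (isT : (1 < 2)%N)) E | ->] //.
by rewrite -(subKn h1) E subKn.
Qed.
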